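(* Let $G$ be a $(3,4)$-biregular $X,Y$-bigraph in which every vertex of $X$ has degree 3 and every vertex of $Y$ has degree 4. If $G$ has a subgraph that contains every vertex of $X$ and is a $(2,4)$-biregular bigraph, then $G$ has a $P_7$-factor (and hence an interval 6-coloring).
   Context: Graphs may have multiple edges. An $X,Y$-bigraph is a bipartite graph with partite sets $X$ and $Y$. An $(a,b)$-biregular bigraph is a bipartite graph in which every vertex of one part has degree $a$ and every vertex of the other part has degree $b$. A $P_7$-factor is a spanning subgraph each of whose components is a path on 7 vertices. An interval 6-coloring is a proper edge-coloring with colors from $\{1,\dots,6\}$ such that at every vertex the colors on its incident edges form a set of consecutive integers. *)

(* Defs.v *)
From mathcomp Require Import all_boot.
Set Implicit Arguments. Unset Strict Implicit. Unset Printing Implicit Defensive.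

(* A bipartite multigraph (an X,Y-bigraph) is given by finite vertex types X, Y,
   a finite edge type E and, for each edge e, its endpoint ex e in X and ey e in Y.
   Parallel edges are allowed (ex, ey need not be jointly injective). *)

Section Bigraph.
Variables (X Y E : finType) (ex : E -> X) (ey : E -> Y).

Definition vtx := (X + Y)%type.

Definition incident (e : E) (v : vtx) : bool :=
  match v with inl x => ex e == x | inr y => ey e == y end.

Definition joins (e : E) (u v : vtx) : bool :=
  ((u == inl (ex e)) && (v == inr (ey e))) ||
  ((u == inr (ey e)) && (v == inl (ex e))).

Definition degX (x : X) : nat := #|[set e | ex e == x]|.
Definition degY (y : Y) : nat := #|[set e | ey e == y]|.

Definition has_sub_2_4_biregular : Prop :=
  exists (F : {set E}) (Y' : {set Y}),
    [/\ forall e, e \in F -> ey e \in Y',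
        forall x : X, #|[set e in F | ex e == x]| = 2 &
        forall y : Y, y \in Y' -> #|[set e in F | ey e == y]| = 4].

Definition is_P7 (p : 'I_7 -> vtx) (q : 'I_6 -> E) : Prop :=
  injective p /\ forall i : 'I_6, joins (q i) (p (widen_ord (leqnSn 6) i)) (p (lift ord0 i)).

(* The spanning subgraph (X + Y, F) is a P7-factor: every vertex v lies in a
   path P on 7 vertices such that the edges of F incident to vertices of P are
   exactly the edges of P; hence the component of v in (X+Y, F) is exactly P. *)
Definition is_P7_factor (F : {set E}) : Prop :=
  forall v : vtx, exists (p : 'I_7 -> vtx) (q : 'I_6 -> E),
    [/\ is_P7 p q, v \in codom p &
        [set e in F | [exists i, incident e (p i)]] = [set q i | i : 'I_6]].

Definition has_P7_factor : Prop := exists F : {set E}, is_P7_factor F.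

Definition interval_coloring (k : nat) (c : E -> nat) : Prop :=
  [/\ forall e, 1 <= c e <= k,
      forall e f (v : vtx), e != f -> incident e v -> incident f v -> c e != c f &
      forall v : vtx, exists a b : nat, forall n : nat,
        (exists2 e, incident e v & c e = n) <-> (a <= n <= b)].

Definition has_interval_coloring (k : nat) : Prop :=
  exists c : E -> nat, interval_coloring k c.

End Bigraph.

(* Main.v *)
Require Import Defs.
From mathcomp Require Import all_boot.
From mathcomp Require Import all_boot zify.
Set Implicit Arguments. Unset Strict Implicit. Unset Printing Implicit Defensive.

Lemma orient_gen (V E : finType) : forall n (a b : E -> V),
  \sum_e (a e != b e : nat) <= n ->
  (forall v, ~~ odd (\sum_e ((a e == v) + (b e == v)))) ->
  exists o : E -> bool, forall v,
    \sum_e ((if o e then a e else b e) == v : nat) =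
    \sum_e ((if o e then b e else a e) == v : nat).
Proof.
elim=> [|n IH] a b Hn Hev.
- exists (fun _ => true) => v; apply: eq_bigr => e _.
  have : (a e != b e : nat) = 0.
    by apply/eqP; rewrite -leqn0; apply: leq_trans Hn; rewrite (bigD1 e) //= leq_addr.
  by case: eqP => // ->.
case: (pickP (fun e => a e != b e)) => [e1 He1 | Hall]; last first.
  exists (fun _ => true) => v; apply: eq_bigr => e _.
  by move: (Hall e) => /= /negbFE/eqP ->.
set v := b e1.
case: (pickP (fun e => (e != e1) && odd ((a e == v) + (b e == v)))) =>
  [e2 /andP[He21 Ho] | Hno]; last first.
  exfalso; move: (Hev v); rewrite (bigD1 e1) //= oddD.
  have Hev2 : ~~ odd (\sum_(e | e != e1) ((a e == v) + (b e == v))).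
    apply: (big_ind (fun n => ~~ odd n)) => //.
      by move=> x y Hx Hy; rewrite oddD (negbTE Hx) (negbTE Hy).
    by move=> e He; move: (Hno e); rewrite He /= => ->.
  by rewrite (negbTE Hev2) /v eqxx (negbTE He1).
have [w [Hwv Hw1 Hw2]] : exists w, [/\ w != v,
    (if a e2 == v then a e2 else b e2) = v &
    (if a e2 == v then b e2 else a e2) = w].
  move: Ho; case: (eqVneq (a e2) v) => [->|Hav] /=.
    by case: eqP => //= Hbv _; exists (b e2); split => //; apply/eqP.
  by case: eqP => //= Hbv _; exists (a e2); split.
set a' := fun e => if e == e1 then a e1 else if e == e2 then v else a e.
set b' := fun e => if e == e1 then w else if e == e2 then v else b e.
have Hrest : forall (F G : E -> nat), (forall e, e != e1 -> e != e2 -> F e = G e) ->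
    \sum_(e | (e != e1) && (e != e2)) F e = \sum_(e | (e != e1) && (e != e2)) G e.
  by move=> F G HFG; apply: eq_bigr => e /andP[H1 H2]; apply: HFG.
have Ha'1 : a' e1 = a e1 by rewrite /a' eqxx.
have Hb'1 : b' e1 = w by rewrite /b' eqxx.
have Ha'2 : a' e2 = v by rewrite /a' (negbTE He21) eqxx.
have Hb'2 : b' e2 = v by rewrite /b' (negbTE He21) eqxx.
have Ha'o : forall e, e != e1 -> e != e2 -> a' e = a e.
  by move=> e H1 H2; rewrite /a' (negbTE H1) (negbTE H2).
have Hb'o : forall e, e != e1 -> e != e2 -> b' e = b e.
  by move=> e H1 H2; rewrite /b' (negbTE H1) (negbTE H2).
have Hsplit : forall F : E -> nat, \sum_e F e = F e1 + (F e2 + \sum_(e | (e != e1) && (e != e2)) F e).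
  by move=> F; rewrite (bigD1 e1) //= (bigD1 e2) //=.
have Hm : forall z, (a e2 == z) + (b e2 == z) = (v == z) + (w == z).
  move=> z; rewrite -Hw1 -Hw2; case: ifP => _ //; exact: addnC.
have [o' Ho'] : exists o' : E -> bool, forall z,
    \sum_e ((if o' e then a' e else b' e) == z : nat) =
    \sum_e ((if o' e then b' e else a' e) == z : nat).
  apply: IH.
    move: Hn; rewrite !Hsplit Ha'2 Hb'2 eqxx /= add0n.
    rewrite (Hrest (fun e => (a' e != b' e : nat)) (fun e => (a e != b e : nat))); last first.
      by move=> e H1 H2; rewrite Ha'o ?Hb'o.
    have -> : (a e2 != b e2 : nat) = 1.
      move: Hwv; rewrite -Hw1 -Hw2; case: ifP => _.
        by rewrite eq_sym => ->.
      by move=> ->.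
    rewrite He1 /= => H; set S := \sum_(e | _) _ in H *.
    clearbody S; move: H (a' e1 != b' e1); clear; move=> H c; case: c => /=; lia.
  move=> z; move: (Hev z); rewrite !Hsplit Ha'1 Hb'1 Ha'2 Hb'2 Hm.
  rewrite (Hrest (fun e => (a' e == z) + (b' e == z)) (fun e => (a e == z) + (b e == z))); last first.
    by move=> e H1 H2; rewrite Ha'o ?Hb'o.
  congr (~~ odd _); rewrite /v; lia.
exists (fun e => if e == e1 then o' e1 else if e == e2 then (o' e1 == (a e2 == v)) else o' e).
move=> z; have := Ho' z; rewrite !Hsplit eqxx (negbTE He21) eqxx.
rewrite (Hrest (fun e => ((if o' e then a' e else b' e) == z : nat))
               (fun e => ((if (if e == e1 then o' e1 else if e == e2 then (o' e1 == (a e2 == v)) else o' e) then a e else b e) == z : nat))); last first.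
  by move=> e H1 H2; rewrite (negbTE H1) (negbTE H2) Ha'o ?Hb'o.
rewrite (Hrest (fun e => ((if o' e then b' e else a' e) == z : nat))
               (fun e => ((if (if e == e1 then o' e1 else if e == e2 then (o' e1 == (a e2 == v)) else o' e) then b e else a e) == z : nat))); last first.
  by move=> e H1 H2; rewrite (negbTE H1) (negbTE H2) Ha'o ?Hb'o.
rewrite Ha'1 Hb'1 Ha'2 Hb'2 if_same.
case: (o' e1) => /=.
- rewrite Hw1 Hw2 /v; lia.
- have Hw1' : (if a e2 != v then a e2 else b e2) = w by move: Hw2; case: (a e2 == v).
  have Hw2' : (if a e2 != v then b e2 else a e2) = v by move: Hw1; case: (a e2 == v).
  rewrite Hw1' Hw2' /v; lia.
Qed.

Lemma sumb_card (T : finType) (P : pred T) : \sum_t (P t : nat) = #|[set t | P t]|.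
Proof. rewrite -sum1dep_card [RHS]big_mkcond /=; apply: eq_bigr => t _; by case: (P t). Qed.

Definition the (T : finType) (t0 : T) (P : pred T) := odflt t0 [pick t | P t].

Lemma the_spec (T : finType) (t0 : T) (P : pred T) :
  \sum_t (P t : nat) = 1 -> P (the t0 P) /\ forall t, P t -> t = the t0 P.
Proof.
rewrite sumb_card => H; have [x Hx] := mem_card1 H.
have Px : P x by move: (Hx x); rewrite !inE /= eqxx.
rewrite /the; case: pickP => [y Py|/(_ x)]; last by rewrite Px.
have Hy: y = x by move: (Hx y); rewrite inE Py => /esym/eqP.
split => // t Pt; move: (Hx t); rewrite inE Pt Hy => /esym/eqP -> //.
Qed.

Lemma sumb0 (T : finType) (P : pred T) : (forall t, ~~ P t) -> \sum_t (P t : nat) = 0.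
Proof. by move=> H; apply: big1 => t _; rewrite (negbTE (H t)). Qed.

Lemma sumb_reindex (T U : finType) (f : T -> U) (P : pred T) (r : U -> T) (Q : pred T) :
  (forall u, P (r u) /\ f (r u) = u) -> (forall t, P t -> t = r (f t)) ->
  \sum_t (P t && Q t : nat) = \sum_u (Q (r u) : nat).
Proof.
move=> Hr Hf.
rewrite (partition_big f (fun _ => true)) //=; apply: eq_bigr => u _.
have [Pr fr] := Hr u.
rewrite (bigD1 (r u)) /=; last by rewrite fr.
rewrite Pr big1 ?addn0 // => t /andP[/eqP ftu ntr].
case Pt: (P t) => //=; move: ntr; by rewrite (Hf t Pt) ftu eqxx.
Qed.

Lemma uniq_map_in (T U : eqType) (f : T -> U) s x y :
  uniq (map f s) -> x \in s -> y \in s -> f x = f y -> x = y.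
Proof.
elim: s => //= z s IH /andP[Hz Hu]; rewrite !inE => /orP[/eqP->|Hx] /orP[/eqP->|Hy] // Hf.
- by move: Hz; rewrite Hf (map_f f Hy).
- by move: Hz; rewrite -Hf (map_f f Hx).
- exact: IH.
Qed.

Lemma local_good (T : eqType) (col : T -> nat) (inc : T -> bool) (gs : seq T) a :
  0 < size gs -> (forall e, inc e = (e \in gs)) -> perm_eq (map col gs) (iota a (size gs)) ->
  (forall e f, e != f -> inc e -> inc f -> col e != col f) /\
  exists a' b', forall n, (exists2 e, inc e & col e = n) <-> (a' <= n <= b').
Proof.
move=> Hs Hinc Hp; split.
  move=> e f Hef; rewrite !Hinc => He Hf; apply/negP => /eqP Hc.
  have Hu : uniq (map col gs) by rewrite (perm_uniq Hp) iota_uniq.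
  by move: Hef; rewrite (uniq_map_in Hu He Hf Hc) eqxx.
exists a, (a + size gs).-1 => n; split.
  case=> e; rewrite Hinc => He <-.
  have : col e \in iota a (size gs) by rewrite -(perm_mem Hp) map_f.
  rewrite mem_iota; lia.
move=> Hn; have : n \in map col gs by rewrite (perm_mem Hp) mem_iota; lia.
by case/mapP => e He ->; exists e; rewrite ?Hinc.
Qed.

Lemma exists_nth (T : eqType) (x0 : T) (s : seq T) n (P : pred T) :
  size s = n -> [exists i : 'I_n, P (nth x0 s i)] = has P s.
Proof.
move=> Hs; apply/existsP/hasP => [[i Pi]|[x xs Px]].
  by exists (nth x0 s i) => //; apply: mem_nth; rewrite Hs.
have Hi : index x s < n by rewrite -Hs index_mem.
by exists (Ordinal Hi); rewrite /= nth_index.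
Qed.

Lemma imset_nth (T : finType) (x0 : T) (s : seq T) n :
  size s = n -> forall x, (x \in [set nth x0 s i | i : 'I_n]) = (x \in s).
Proof.
move=> Hs x; apply/imsetP/idP => [[i _ ->]|xs].
  by apply: mem_nth; rewrite Hs.
have Hi : index x s < n by rewrite -Hs index_mem.
by exists (Ordinal Hi) => //; rewrite /= nth_index.
Qed.

Lemma codom_nth (T : eqType) (x0 : T) (s : seq T) n :
  size s = n -> forall x, (x \in codom (fun i : 'I_n => nth x0 s i)) = (x \in s).
Proof.
move=> Hs x; apply/codomP/idP => [[i ->]|xs].
  by apply: mem_nth; rewrite Hs.
have Hi : index x s < n by rewrite -Hs index_mem.
by exists (Ordinal Hi); rewrite /= nth_index.
Qed.

Lemma inj_nth (T : eqType) (x0 : T) (s : seq T) n :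
  size s = n -> uniq s -> injective (fun i : 'I_n => nth x0 s i).
Proof.
move=> Hs Hu i j /eqP; rewrite nth_uniq ?Hs // => /eqP H; exact: val_inj.
Qed.
Section Main.
Variables (X Y E : finType) (ex : E -> X) (ey : E -> Y) (F : {set E}) (Y' : {set Y}) (e0 : E).
Hypothesis HdX : forall x, degX ex x = 3.
Hypothesis HdY : forall y, degY ey y = 4.
Hypothesis HF : forall e, e \in F -> ey e \in Y'.
Hypothesis HFx : forall x : X, #|[set e in F | ex e == x]| = 2.
Hypothesis HFy : forall y : Y, y \in Y' -> #|[set e in F | ey e == y]| = 4.

Let x0 := ex e0.

Lemma degx x : \sum_e (ex e == x : nat) = 3.
Proof. by rewrite sumb_card -(HdX x). Qed.
Lemma degy y : \sum_e (ey e == y : nat) = 4.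
Proof. by rewrite sumb_card -(HdY y). Qed.
Lemma Fx x : \sum_e ((e \in F) && (ex e == x) : nat) = 2.
Proof. by rewrite sumb_card -(HFx x). Qed.
Lemma Fy y : y \in Y' -> \sum_e ((e \in F) && (ey e == y) : nat) = 4.
Proof. by move=> Hy; rewrite sumb_card -(HFy Hy). Qed.

Lemma split_F (g : E -> bool) :
  \sum_e (g e : nat) = \sum_e ((e \in F) && g e : nat) + \sum_e ((e \notin F) && g e : nat).
Proof. by rewrite -big_split /=; apply: eq_bigr => e _; case: (e \in F); case: (g e). Qed.

Lemma Sx x : \sum_e ((e \notin F) && (ex e == x) : nat) = 1.
Proof. by move: (degx x); rewrite split_F Fx; lia. Qed.
Lemma Sy y : y \in Y' -> \sum_e ((e \notin F) && (ey e == y) : nat) = 0.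
Proof. by move=> Hy; move: (degy y); rewrite split_F (Fy Hy); lia. Qed.
Lemma Fy0 y : y \notin Y' -> \sum_e ((e \in F) && (ey e == y) : nat) = 0.
Proof.
move=> Hy; apply: sumb0 => e; apply/negP => /andP[/HF He /eqP Hey].
by move: Hy; rewrite -Hey He.
Qed.
Lemma Sy4 y : y \notin Y' -> \sum_e ((e \notin F) && (ey e == y) : nat) = 4.
Proof. by move=> Hy; move: (degy y); rewrite split_F (Fy0 Hy); lia. Qed.
Lemma S_notY' e : e \notin F -> ey e \notin Y'.
Proof.
move=> He; apply/negP => Hy; move: (Sy Hy); rewrite (bigD1 e) //= He eqxx; lia.
Qed.

Definition a1 (e : E) : X + Y := inl (ex e).
Definition b1 (e : E) : X + Y := if e \in F then inr (ey e) else inl (ex e).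

Lemma ev1 v : ~~ odd (\sum_e ((a1 e == v) + (b1 e == v))).
Proof.
case: v => [x|y].
  rewrite (eq_bigr (fun e => (ex e == x) + ((e \notin F) && (ex e == x)))); last first.
    by move=> e _; rewrite /a1 /b1; case: (e \in F).
  by rewrite big_split /= degx Sx.
rewrite (eq_bigr (fun e => ((e \in F) && (ey e == y) : nat))); last first.
  by move=> e _; rewrite /a1 /b1; case: (e \in F).
by case: (boolP (y \in Y')) => Hy; [rewrite Fy | rewrite Fy0].
Qed.

Variable o1 : E -> bool.
Hypothesis Ho1 : forall v, \sum_e ((if o1 e then a1 e else b1 e) == v : nat) =
                          \sum_e ((if o1 e then b1 e else a1 e) == v : nat).

Definition D e := (e \in F) && o1 e.
Definition U e := (e \in F) && ~~ o1 e.
Definition Se e := e \notin F.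

Lemma DUx x : \sum_e (D e && (ex e == x) : nat) = 1 /\ \sum_e (U e && (ex e == x) : nat) = 1.
Proof.
have := Ho1 (inl x).
rewrite (eq_bigr (fun e => (D e && (ex e == x) : nat) + (Se e && (ex e == x)))); last first.
  by move=> e _; rewrite /D /Se /a1 /b1; case: (o1 e); case: (e \in F); rewrite /= ?addn0 ?add0n.
rewrite [RHS](eq_bigr (fun e => (U e && (ex e == x) : nat) + (Se e && (ex e == x)))); last first.
  by move=> e _; rewrite /U /Se /a1 /b1; case: (o1 e); case: (e \in F); rewrite /= ?addn0 ?add0n.
have := Fx x.
rewrite (eq_bigr (fun e => (D e && (ex e == x) : nat) + (U e && (ex e == x)))); last first.
  by move=> e _; rewrite /U /D; case: (o1 e); case: (e \in F); rewrite /= ?addn0 ?add0n.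
rewrite !big_split /=; lia.
Qed.

Lemma DUy y : y \in Y' -> \sum_e (D e && (ey e == y) : nat) = 2 /\ \sum_e (U e && (ey e == y) : nat) = 2.
Proof.
move=> Hy; have := Ho1 (inr y).
rewrite (eq_bigr (fun e => (U e && (ey e == y) : nat))); last first.
  by move=> e _; rewrite /U /a1 /b1; case: (o1 e); case: (e \in F); rewrite /= ?addn0 ?add0n.
rewrite [RHS](eq_bigr (fun e => (D e && (ey e == y) : nat))); last first.
  by move=> e _; rewrite /D /a1 /b1; case: (o1 e); case: (e \in F); rewrite /= ?addn0 ?add0n.
have := Fy Hy.
rewrite (eq_bigr (fun e => (D e && (ey e == y) : nat) + (U e && (ey e == y)))); last first.
  by move=> e _; rewrite /U /D; case: (o1 e); case: (e \in F); rewrite /= ?addn0 ?add0n.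
rewrite !big_split /=; lia.
Qed.

Definition dE x := the e0 (fun e => D e && (ex e == x)).
Definition uE x := the e0 (fun e => U e && (ex e == x)).
Definition sE x := the e0 (fun e => Se e && (ex e == x)).

Lemma dE_spec x : D (dE x) /\ ex (dE x) = x.
Proof. by have [/andP[H1 /eqP H2] _] := the_spec e0 (proj1 (DUx x)). Qed.
Lemma uE_spec x : U (uE x) /\ ex (uE x) = x.
Proof. by have [/andP[H1 /eqP H2] _] := the_spec e0 (proj2 (DUx x)). Qed.
Lemma sE_spec x : Se (sE x) /\ ex (sE x) = x.
Proof. by have [/andP[H1 /eqP H2] _] := the_spec e0 (Sx x). Qed.
Lemma dE_uniq e : D e -> e = dE (ex e).
Proof. by move=> De; have [_ H] := the_spec e0 (proj1 (DUx (ex e))); apply: H; rewrite De eqxx. Qed.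
Lemma uE_uniq e : U e -> e = uE (ex e).
Proof. by move=> De; have [_ H] := the_spec e0 (proj2 (DUx (ex e))); apply: H; rewrite De eqxx. Qed.
Lemma sE_uniq e : Se e -> e = sE (ex e).
Proof. by move=> De; have [_ H] := the_spec e0 (Sx (ex e)); apply: H; move: De; rewrite /Se => ->; rewrite eqxx. Qed.

Lemma edge_cases e : [\/ D e /\ e = dE (ex e), U e /\ e = uE (ex e) | Se e /\ e = sE (ex e)].
Proof.
rewrite /D /U /Se; case: (boolP (e \in F)) => He /=.
  case Ho: (o1 e) => /=.
    by apply: Or31; split=> //; apply: dE_uniq; rewrite /D He Ho.
  by apply: Or32; split=> //; apply: uE_uniq; rewrite /U He Ho.
by apply: Or33; split=> //; apply: sE_uniq.
Qed.

Definition hy x := ey (dE x).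
Definition ty x := ey (uE x).
Definition cen x := ey (sE x).

Lemma hyY x : hy x \in Y'.
Proof. by apply: HF; have [/andP[]] := dE_spec x. Qed.
Lemma tyY x : ty x \in Y'.
Proof. by apply: HF; have [/andP[]] := uE_spec x. Qed.
Lemma cenY x : cen x \notin Y'.
Proof. by apply: S_notY'; have [] := sE_spec x. Qed.

Lemma sum_hy y : \sum_x (hy x == y : nat) = \sum_e (D e && (ey e == y) : nat).
Proof.
symmetry; apply: (@sumb_reindex _ _ ex _ dE (fun e => ey e == y)).
  by move=> x; have [] := dE_spec x.
exact: dE_uniq.
Qed.
Lemma sum_ty y : \sum_x (ty x == y : nat) = \sum_e (U e && (ey e == y) : nat).
Proof.
symmetry; apply: (@sumb_reindex _ _ ex _ uE (fun e => ey e == y)).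
  by move=> x; have [] := uE_spec x.
exact: uE_uniq.
Qed.
Lemma sum_cen y (P : pred X) : \sum_x ((cen x == y) && P x : nat) = \sum_e (Se e && ((ey e == y) && P (ex e)) : nat).
Proof.
rewrite (@sumb_reindex _ _ ex _ sE (fun e => (ey e == y) && P (ex e))).
- by apply: eq_bigr => x _; have [_ ->] := sE_spec x.
- by move=> x; have [] := sE_spec x.
- exact: sE_uniq.
Qed.
Lemma sum_cen0 y : \sum_x (cen x == y : nat) = \sum_e (Se e && (ey e == y) : nat).
Proof.
symmetry; apply: (@sumb_reindex _ _ ex _ sE (fun e => ey e == y)).
  by move=> x; have [] := sE_spec x.
exact: sE_uniq.
Qed.

Lemma D0 y : y \notin Y' -> \sum_e (D e && (ey e == y) : nat) = 0.
Proof.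
move=> Hy; apply: sumb0 => e; apply/negP => /andP[/andP[/HF He _] /eqP Hey].
by move: Hy; rewrite -Hey He.
Qed.
Lemma U0 y : y \notin Y' -> \sum_e (U e && (ey e == y) : nat) = 0.
Proof.
move=> Hy; apply: sumb0 => e; apply/negP => /andP[/andP[/HF He _] /eqP Hey].
by move: Hy; rewrite -Hey He.
Qed.

Lemma ev2 y : ~~ odd (\sum_x ((hy x == y) + (cen x == y))).
Proof.
rewrite big_split /= sum_hy sum_cen0.
case: (boolP (y \in Y')) => Hy.
  by rewrite (proj1 (DUy Hy)) Sy.
by rewrite (D0 Hy) Sy4.
Qed.

Variable oB : X -> bool.
Hypothesis HoB : forall y, \sum_x ((if oB x then hy x else cen x) == y : nat) =
                          \sum_x ((if oB x then cen x else hy x) == y : nat).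

Lemma split_bool (T : finType) (g : T -> bool) (b : T -> bool) :
  \sum_t (g t : nat) = \sum_t (g t && (b t == true) : nat) + \sum_t (g t && (b t == false) : nat).
Proof. by rewrite -big_split /=; apply: eq_bigr => t _; case: (g t); case: (b t). Qed.

Lemma B_gen y : \sum_x ((hy x == y) && (oB x == true) : nat) + \sum_x ((cen x == y) && (oB x == false) : nat)
   = \sum_x ((hy x == y) && (oB x == false) : nat) + \sum_x ((cen x == y) && (oB x == true) : nat).
Proof.
rewrite -!big_split /=.
transitivity (\sum_x ((if oB x then hy x else cen x) == y : nat)).
  by apply: eq_bigr => x _; case: (oB x); case: (hy x == y); case: (cen x == y).
by rewrite HoB; apply: eq_bigr => x _; case: (oB x); case: (hy x == y); case: (cen x == y).
Qed.

Lemma B_y y (Hy : y \in Y') b : \sum_x ((hy x == y) && (oB x == b) : nat) = 1.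
Proof.
have H0 : forall b', \sum_x ((cen x == y) && (oB x == b') : nat) = 0.
  move=> b'; apply: sumb0 => x; apply/negP => /andP[/eqP Hc _].
  by move: (cenY x); rewrite Hc Hy.
have := B_gen y; rewrite !H0 !addn0 => H.
have := split_bool (fun x => hy x == y) oB; rewrite sum_hy (proj1 (DUy Hy)).
by case: b; lia.
Qed.

Lemma B_c c (Hc : c \notin Y') b : \sum_x ((cen x == c) && (oB x == b) : nat) = 2.
Proof.
have H0 : forall b', \sum_x ((hy x == c) && (oB x == b') : nat) = 0.
  move=> b'; apply: sumb0 => x; apply/negP => /andP[/eqP Hh _].
  by move: (hyY x); rewrite Hh (negbTE Hc).
have := B_gen c; rewrite !H0 !add0n => H.
have := split_bool (fun x => cen x == c) oB; rewrite sum_cen0 (Sy4 Hc).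
by case: b; lia.
Qed.

Definition a3 x : Y + (Y * bool) := inl (ty x).
Definition b3 x : Y + (Y * bool) := inr (cen x, oB x).

Lemma ev3 v : ~~ odd (\sum_x ((a3 x == v) + (b3 x == v))).
Proof.
case: v => [y|[c b]].
  rewrite (eq_bigr (fun x : X => (ty x == y : nat))); last first.
    by move=> x _; rewrite /a3 /b3 /= addn0.
  rewrite sum_ty; case: (boolP (y \in Y')) => Hy.
    by rewrite (proj2 (DUy Hy)).
  by rewrite (U0 Hy).
rewrite (eq_bigr (fun x : X => ((cen x == c) && (oB x == b) : nat))); last first.
  by move=> x _; rewrite /a3 /b3 /= add0n.
case: (boolP (c \in Y')) => Hc; last by rewrite (B_c Hc).
rewrite sumb0 // => x; apply/negP => /andP[/eqP Hx _].
by move: (cenY x); rewrite Hx Hc.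
Qed.

Variable o3 : X -> bool.
Hypothesis Ho3 : forall v, \sum_x ((if o3 x then a3 x else b3 x) == v : nat) =
                          \sum_x ((if o3 x then b3 x else a3 x) == v : nat).

Lemma Q_y y (Hy : y \in Y') (g : bool) : \sum_x ((ty x == y) && (o3 x == g) : nat) = 1.
Proof.
have := Ho3 (inl y).
rewrite (eq_bigr (fun x : X => ((ty x == y) && (o3 x == true) : nat))); last first.
  by move=> x _; rewrite /a3 /b3; case: (o3 x); rewrite /= ?andbT ?andbF.
rewrite (eq_bigr (fun x : X => ((ty x == y) && (o3 x == false) : nat)) (P := fun _ => true) (F1 := fun x => ((if o3 x then b3 x else a3 x) == inl y : nat))); last first.
  by move=> x _; rewrite /a3 /b3; case: (o3 x); rewrite /= ?andbT ?andbF.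
have := split_bool (fun x => ty x == y) o3; rewrite /= sum_ty (proj2 (DUy Hy)).
by case: g; lia.
Qed.

Lemma Q_c c (Hc : c \notin Y') (b g : bool) : \sum_x ([&& cen x == c, oB x == b & o3 x == g] : nat) = 1.
Proof.
have := Ho3 (inr (c, b)).
rewrite (eq_bigr (fun x : X => ([&& cen x == c, oB x == b & o3 x == false] : nat))); last first.
  by move=> x _; rewrite /a3 /b3; case: (o3 x); rewrite /= ?andbT ?andbF.
rewrite (eq_bigr (fun x : X => ([&& cen x == c, oB x == b & o3 x == true] : nat)) (P := fun _ => true) (F1 := fun x => ((if o3 x then b3 x else a3 x) == inr (c, b) : nat))); last first.
  by move=> x _; rewrite /a3 /b3; case: (o3 x); rewrite /= ?andbT ?andbF.
have : \sum_x ([&& cen x == c, oB x == b & o3 x == true] : nat) +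
        \sum_x ([&& cen x == c, oB x == b & o3 x == false] : nat) = 2.
  rewrite -(B_c Hc b) -big_split; apply: eq_bigr => x _.
  by case: (cen x == c); case: (oB x == b); case: (o3 x).
by case: g; lia.
Qed.
Definition Hd y b := the x0 (fun x => (hy x == y) && (oB x == b)).
Definition Tl y g := the x0 (fun x => (ty x == y) && (o3 x == g)).
Definition L c b g := the x0 (fun x => [&& cen x == c, oB x == b & o3 x == g]).

Lemma Hd_spec y b : y \in Y' -> hy (Hd y b) = y /\ oB (Hd y b) = b.
Proof. by move=> Hy; have [/andP[/eqP -> /eqP ->] _] := the_spec x0 (B_y Hy b). Qed.
Lemma Hd_uniq x : x = Hd (hy x) (oB x).
Proof. by have [_ H] := the_spec x0 (B_y (hyY x) (oB x)); apply: H; rewrite !eqxx. Qed.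
Lemma Tl_spec y g : y \in Y' -> ty (Tl y g) = y /\ o3 (Tl y g) = g.
Proof. by move=> Hy; have [/andP[/eqP -> /eqP ->] _] := the_spec x0 (Q_y Hy g). Qed.
Lemma Tl_uniq x : x = Tl (ty x) (o3 x).
Proof. by have [_ H] := the_spec x0 (Q_y (tyY x) (o3 x)); apply: H; rewrite !eqxx. Qed.
Lemma L_spec c b g : c \notin Y' -> [/\ cen (L c b g) = c, oB (L c b g) = b & o3 (L c b g) = g].
Proof. by move=> Hc; have [/and3P[/eqP -> /eqP -> /eqP ->] _] := the_spec x0 (Q_c Hc b g). Qed.
Lemma L_uniq x : x = L (cen x) (oB x) (o3 x).
Proof. by have [_ H] := the_spec x0 (Q_c (cenY x) (oB x) (o3 x)); apply: H; rewrite !eqxx. Qed.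

Definition hcol x := if oB x then (if o3 x then 1 else 6) else (if o3 (Hd (hy x) true) then 2 else 5).
Definition scol x := if oB x then (if o3 x then 2 else 5) else (if o3 x then 4 else 3).
Definition col e := if e \in F then (if o1 e then hcol (ex e) else (if o3 (ex e) then 3 else 4)) else scol (ex e).

Lemma col_dE x : col (dE x) = hcol x.
Proof. by have [/andP[H1 H2] H3] := dE_spec x; rewrite /col H1 H2 H3. Qed.
Lemma col_uE x : col (uE x) = if o3 x then 3 else 4.
Proof. by have [/andP[H1 H2] H3] := uE_spec x; rewrite /col H1 (negbTE H2) H3. Qed.
Lemma col_sE x : col (sE x) = scol x.
Proof. by have [H1 H3] := sE_spec x; rewrite /col (negbTE H1) H3. Qed.

Lemma exdE x : ex (dE x) = x. Proof. by have [] := dE_spec x. Qed.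
Lemma exuE x : ex (uE x) = x. Proof. by have [] := uE_spec x. Qed.
Lemma exsE x : ex (sE x) = x. Proof. by have [] := sE_spec x. Qed.

Lemma local_x x : (forall e, incident ex ey e (inl x) = (e \in [:: dE x; uE x; sE x])) /\
   perm_eq (map col [:: dE x; uE x; sE x])
     (iota (if oB x then (if o3 x then 1 else 4) else (if o3 (Hd (hy x) true) then 2 else 3)) 3).
Proof.
split.
  move=> e; rewrite /= !inE; apply/idP/idP.
    move=> /eqP <-; case: (edge_cases e) => [][_ ->]; rewrite ?exdE ?exuE ?exsE eqxx ?orbT //.
  by case/or3P => /eqP ->; rewrite ?exdE ?exuE ?exsE.
rewrite /= col_dE col_uE col_sE /hcol /scol.
by case: (oB x); case: (o3 x); case: (o3 (Hd (hy x) true)).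
Qed.

Lemma local_y y (Hy : y \in Y') :
  (forall e, incident ex ey e (inr y) = (e \in [:: dE (Hd y true); dE (Hd y false); uE (Tl y true); uE (Tl y false)])) /\
   perm_eq (map col [:: dE (Hd y true); dE (Hd y false); uE (Tl y true); uE (Tl y false)])
     (iota (if o3 (Hd y true) then 1 else 3) 4).
Proof.
split.
  move=> e; rewrite /= !inE; apply/idP/idP.
    move=> /eqP Hey; case: (edge_cases e) => [][He Ee].
    - have Hh : hy (ex e) = y by rewrite /hy -Ee.
      rewrite Ee (Hd_uniq (ex e)) Hh; case: (oB (ex e)); rewrite eqxx ?orbT //.
    - have Hh : ty (ex e) = y by rewrite /ty -Ee.
      rewrite Ee (Tl_uniq (ex e)) Hh; case: (o3 (ex e)); rewrite eqxx ?orbT //.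
    - by move: (S_notY' He); rewrite Hey Hy.
  case/or4P => /eqP ->.
  - by rewrite -/(hy _) (proj1 (Hd_spec _ Hy)).
  - by rewrite -/(hy _) (proj1 (Hd_spec _ Hy)).
  - by rewrite -/(ty _) (proj1 (Tl_spec _ Hy)).
  - by rewrite -/(ty _) (proj1 (Tl_spec _ Hy)).
rewrite /= !col_dE !col_uE /hcol !(proj2 (Hd_spec _ Hy)) (proj1 (Hd_spec false Hy)) !(proj2 (Tl_spec _ Hy)).
by case: (o3 (Hd y true)).
Qed.

Lemma local_c c (Hc : c \notin Y') :
  (forall e, incident ex ey e (inr c) = (e \in [:: sE (L c true true); sE (L c true false); sE (L c false true); sE (L c false false)])) /\
   perm_eq (map col [:: sE (L c true true); sE (L c true false); sE (L c false true); sE (L c false false)])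
     (iota 2 4).
Proof.
split.
  move=> e; rewrite /= !inE; apply/idP/idP.
    move=> /eqP Hey; case: (edge_cases e) => [][He Ee].
    - by move: Hc; rewrite -Hey; case/andP: He => /HF ->.
    - by move: Hc; rewrite -Hey; case/andP: He => /HF ->.
    - have Hh : cen (ex e) = c by rewrite /cen -Ee.
      rewrite Ee (L_uniq (ex e)) Hh; case: (oB (ex e)); case: (o3 (ex e)); rewrite eqxx ?orbT //.
  have cL : forall b g, cen (L c b g) = c by move=> b g; case: (@L_spec c b g Hc).
  by case/or4P => /eqP ->; rewrite -/(cen _) cL.
rewrite /= !col_sE /scol.
have oL : forall b g, oB (L c b g) = b /\ o3 (L c b g) = g by move=> b g; case: (@L_spec c b g Hc).
by rewrite !(proj1 (oL _ _)) !(proj2 (oL _ _)).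
Qed.

Lemma local_all v : exists gs a, [/\ 0 < size gs, forall e, incident ex ey e v = (e \in gs) &
   perm_eq (map col gs) (iota a (size gs))].
Proof.
case: v => [x|y].
  by have [H1 H2] := local_x x; do 2 eexists; split; [|exact: H1|exact: H2].
case: (boolP (y \in Y')) => Hy.
  by have [H1 H2] := local_y Hy; do 2 eexists; split; [|exact: H1|exact: H2].
by have [H1 H2] := local_c Hy; do 2 eexists; split; [|exact: H1|exact: H2].
Qed.

Lemma coloring : has_interval_coloring ex ey 6.
Proof.
exists col; split.
- by move=> e; rewrite /col /hcol /scol; repeat case: ifP.
- move=> e f v Hef He Hf; have [gs [a [H1 H2 H3]]] := local_all v.
  by have [H _] := local_good H1 H2 H3; apply: H.
- move=> v; have [gs [a [H1 H2 H3]]] := local_all v.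
  by have [_ H] := local_good H1 H2 H3.
Qed.

Definition xb c := L c true true.
Definition xc c := L c true false.
Definition y1 c := hy (xb c).
Definition y2 c := hy (xc c).
Definition xa c := Hd (y1 c) false.
Definition xd c := Hd (y2 c) false.
Definition ps c : seq (vtx X Y) :=
  [:: inl (xa c); inr (y1 c); inl (xb c); inr c; inl (xc c); inr (y2 c); inl (xd c)].
Definition qs c := [:: dE (xa c); dE (xb c); sE (xb c); sE (xc c); dE (xc c); dE (xd c)].
Definition Fp := [set e | ((e \in F) && o1 e) || ((e \notin F) && oB (ex e))].

Lemma FpD x : dE x \in Fp.
Proof. by have [/andP[H1 H2] _] := dE_spec x; rewrite inE H1 H2. Qed.
Lemma FpS x : oB x -> sE x \in Fp.
Proof. by move=> Hb; have [H1 H2] := sE_spec x; rewrite inE H2 Hb; move: H1; rewrite /Se => ->; rewrite orbT. Qed.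

Lemma FpD' x : ((dE x \in F) && o1 (dE x)) || ((dE x \notin F) && oB (ex (dE x))) = true.
Proof. by move: (FpD x); rewrite inE. Qed.
Lemma FpS' x : oB x -> ((sE x \in F) && o1 (sE x)) || ((sE x \notin F) && oB (ex (sE x))) = true.
Proof. by move=> H; move: (FpS H); rewrite inE. Qed.

Lemma neqb (T U : eqType) (f : T -> U) (u v : T) : f u != f v -> (u == v) = false.
Proof. by move=> H; apply/eqP => Euv; move: H; rewrite Euv eqxx. Qed.

Lemma inl_eq (A B : eqType) (a a' : A) : (inl a == inl a' :> A + B) = (a == a'). Proof. by []. Qed.
Lemma inr_eq (A B : eqType) (b b' : B) : (inr b == inr b' :> A + B) = (b == b'). Proof. by []. Qed.
Lemma inr_inl (A B : eqType) (a : A) (b : B) : (inr b == inl a :> A + B) = false. Proof. by []. Qed.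
Lemma inl_inr (A B : eqType) (a : A) (b : B) : (inl a == inr b :> A + B) = false. Proof. by []. Qed.

Section Path.
Variable c : Y.
Hypothesis Hc : c \notin Y'.

Lemma cL b g : cen (L c b g) = c. Proof. by case: (@L_spec c b g Hc). Qed.
Lemma oBL b g : oB (L c b g) = b. Proof. by case: (@L_spec c b g Hc). Qed.
Lemma o3L b g : o3 (L c b g) = g. Proof. by case: (@L_spec c b g Hc). Qed.

Lemma y1Y : y1 c \in Y'. Proof. exact: hyY. Qed.
Lemma y2Y : y2 c \in Y'. Proof. exact: hyY. Qed.
Lemma Hxb : xb c = Hd (y1 c) true.
Proof. by rewrite {1}(Hd_uniq (xb c)) /xb oBL. Qed.
Lemma Hxc : xc c = Hd (y2 c) true.
Proof. by rewrite {1}(Hd_uniq (xc c)) /xc oBL. Qed.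
Lemma y12 : (y1 c == y2 c) = false.
Proof.
apply/eqP => H; have : o3 (xb c) = o3 (xc c) by rewrite Hxb Hxc H.
by rewrite /xb /xc !o3L.
Qed.
Lemma hxa : hy (xa c) = y1 c. Proof. exact: (proj1 (Hd_spec false y1Y)). Qed.
Lemma hxd : hy (xd c) = y2 c. Proof. exact: (proj1 (Hd_spec false y2Y)). Qed.
Lemma oxa : oB (xa c) = false. Proof. exact: (proj2 (Hd_spec false y1Y)). Qed.
Lemma oxd : oB (xd c) = false. Proof. exact: (proj2 (Hd_spec false y2Y)). Qed.
Lemma oxb : oB (xb c) = true. Proof. exact: oBL. Qed.
Lemma oxc : oB (xc c) = true. Proof. exact: oBL. Qed.

Lemma uniq_ps : uniq (ps c).
Proof.
have ab : (xa c == xb c) = false by apply: (@neqb _ _ oB); rewrite oxa oxb.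
have ac : (xa c == xc c) = false by apply: (@neqb _ _ oB); rewrite oxa oxc.
have ad : (xa c == xd c) = false by apply: (@neqb _ _ hy); rewrite hxa hxd y12.
have bc : (xb c == xc c) = false by apply: (@neqb _ _ o3); rewrite /xb /xc !o3L.
have bd : (xb c == xd c) = false by apply: (@neqb _ _ oB); rewrite oxb oxd.
have cd : (xc c == xd c) = false by apply: (@neqb _ _ oB); rewrite oxc oxd.
have y1c : (y1 c == c) = false by apply: (@neqb _ _ (fun y => y \in Y')); rewrite y1Y (negbTE Hc).
have y2c : (y2 c == c) = false by apply: (@neqb _ _ (fun y => y \in Y')); rewrite y2Y (negbTE Hc).
have cy2 : (c == y2 c) = false by rewrite eq_sym.
rewrite /ps /= !inE !inl_eq !inr_eq !inr_inl !inl_inr /=.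
by rewrite ab ac ad bc bd cd y1c cy2 y12.
Qed.


Lemma P7_ok : is_P7 ex ey (fun i : 'I_7 => nth (inr c) (ps c) i) (fun i : 'I_6 => nth e0 (qs c) i).
Proof.
split; first by apply: inj_nth => //; exact: uniq_ps.
have jD : forall x, joins ex ey (dE x) (inl x) (inr (hy x)).
  by move=> x; rewrite /joins exdE !inl_eq !inr_eq !eqxx.
have jS : forall x, joins ex ey (sE x) (inl x) (inr (cen x)).
  by move=> x; rewrite /joins exsE !inl_eq !inr_eq !eqxx.
have js : forall e u v, joins ex ey e u v = joins ex ey e v u.
  by move=> e u v; rewrite /joins orbC; congr orb; exact: andbC.
case=> [[|[|[|[|[|[|//]]]]]] Hi] /=.
- by rewrite -hxa.
- by rewrite js.
- by have := jS (xb c); rewrite (_ : cen (xb c) = c) //; exact: cL.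
- by rewrite js; have := jS (xc c); rewrite (_ : cen (xc c) = c) //; exact: cL.
- exact: jD.
- by rewrite js -hxd.
Qed.

Lemma Fset : [set e in Fp | [exists i : 'I_7, incident ex ey e (nth (inr c) (ps c) i)]] =
             [set nth e0 (qs c) i | i : 'I_6].
Proof.
apply/setP => e; rewrite inE (@exists_nth _ (inr c) (ps c) 7 (incident ex ey e)) //.
rewrite (@imset_nth _ e0 (qs c) 6) //.
apply/idP/idP.
  case/andP => HFp Hinc; move: HFp; rewrite inE => /orP[HD|/andP[HS HoBe]].
  - have Ee := dE_uniq HD.
    have hye : ey e = hy (ex e) by rewrite {1}Ee.
    rewrite Ee /qs !inE; move: Hinc; rewrite /= hye.
    move=> /orP[/eqP->|/orP[/eqP Hh|/orP[/eqP->|/orP[/eqP Hh|/orP[/eqP->|/orP[/eqP Hh|/orP[/eqP->|//]]]]]]];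
      rewrite ?eqxx ?orbT //.
    + rewrite (Hd_uniq (ex e)) Hh; case: (oB (ex e)); [rewrite -Hxb | rewrite -/(xa c)];
        rewrite eqxx ?orbT //.
    + by move: (hyY (ex e)); rewrite Hh (negbTE Hc).
    + rewrite (Hd_uniq (ex e)) Hh; case: (oB (ex e)); [rewrite -Hxc | rewrite -/(xd c)];
        rewrite eqxx ?orbT //.
  - have Ee := sE_uniq HS.
    have hye : ey e = cen (ex e) by rewrite {1}Ee.
    rewrite Ee /qs !inE; move: Hinc; rewrite /= hye.
    move=> /orP[/eqP Hx|/orP[/eqP Hh|/orP[/eqP->|/orP[/eqP Hh|/orP[/eqP->|/orP[/eqP Hh|/orP[/eqP Hx|//]]]]]]];
      rewrite ?eqxx ?orbT //.
    + by move: HoBe; rewrite Hx oxa.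
    + by move: (cenY (ex e)); rewrite Hh y1Y.
    + rewrite (L_uniq (ex e)) Hh HoBe; case: (o3 (ex e)); rewrite -/(xb c) -/(xc c) eqxx ?orbT //.
    + by move: (cenY (ex e)); rewrite Hh y2Y.
    + by move: HoBe; rewrite Hx oxd.
rewrite /qs !inE.
move=> /orP[/eqP->|/orP[/eqP->|/orP[/eqP->|/orP[/eqP->|/orP[/eqP->|/eqP->]]]]];
  rewrite ?FpD' ?FpS' ?oxb ?oxc //= ?exdE ?exsE eqxx ?orbT //.
Qed.

End Path.

Lemma mem_xa c : inl (xa c) \in ps c. Proof. by rewrite /ps !inE eqxx ?orbT. Qed.
Lemma mem_xb c : inl (xb c) \in ps c. Proof. by rewrite /ps !inE eqxx ?orbT. Qed.
Lemma mem_xc c : inl (xc c) \in ps c. Proof. by rewrite /ps !inE eqxx ?orbT. Qed.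
Lemma mem_xd c : inl (xd c) \in ps c. Proof. by rewrite /ps !inE eqxx ?orbT. Qed.
Lemma mem_y1 c : inr (y1 c) \in ps c. Proof. by rewrite /ps !inE eqxx ?orbT. Qed.
Lemma mem_y2 c : inr (y2 c) \in ps c. Proof. by rewrite /ps !inE eqxx ?orbT. Qed.
Lemma mem_c c : inr c \in ps c. Proof. by rewrite /ps !inE eqxx ?orbT. Qed.

Lemma cover v : exists c, c \notin Y' /\ v \in ps c.
Proof.
case: v => [x|y].
  case Hb: (oB x).
    exists (cen x); split; first exact: cenY.
    have Hx := L_uniq x; rewrite Hb in Hx.
    case Ho: (o3 x) in Hx.
      by rewrite (_ : inl x = inl (xb (cen x))) ?mem_xb // /xb -Hx.
    by rewrite (_ : inl x = inl (xc (cen x))) ?mem_xc // /xc -Hx.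
  set x' := Hd (hy x) true.
  have [hx' ox'] := Hd_spec true (hyY x).
  have Hx' := L_uniq x'; rewrite ox' in Hx'.
  have Hx := Hd_uniq x; rewrite Hb in Hx.
  exists (cen x'); split; first exact: cenY.
  case Ho: (o3 x') in Hx'.
    have Hy1 : y1 (cen x') = hy x by rewrite /y1 /xb -Hx' hx'.
    by rewrite Hx -Hy1; exact: mem_xa.
  have Hy2 : y2 (cen x') = hy x by rewrite /y2 /xc -Hx' hx'.
  by rewrite Hx -Hy2; exact: mem_xd.
case: (boolP (y \in Y')) => Hy; last first.
  by exists y; split => //; exact: mem_c.
set x' := Hd y true.
have [hx' ox'] := Hd_spec true Hy.
have Hx' := L_uniq x'; rewrite ox' in Hx'.
exists (cen x'); split; first exact: cenY.
case Ho: (o3 x') in Hx'.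
  have Hy1 : y1 (cen x') = y by rewrite /y1 /xb -Hx' hx'.
  by rewrite -Hy1; exact: mem_y1.
have Hy2 : y2 (cen x') = y by rewrite /y2 /xc -Hx' hx'.
by rewrite -Hy2; exact: mem_y2.
Qed.

Lemma factor : has_P7_factor ex ey.
Proof.
exists Fp => v; have [c [Hc Hv]] := cover v.
exists (fun i : 'I_7 => nth (inr c) (ps c) i), (fun i : 'I_6 => nth e0 (qs c) i).
split; [exact: P7_ok | by rewrite codom_nth | exact: Fset].
Qed.
End Main.

Unset Implicit Arguments.
Set Strict Implicit.

Theorem mainTheorem5 (X Y E : finType) (ex : E -> X) (ey : E -> Y) :
  (forall x : X, degX ex x = 3) ->
  (forall y : Y, degY ey y = 4) ->
  has_sub_2_4_biregular ex ey ->
  has_P7_factor ex ey /\ has_interval_coloring ex ey 6.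
Proof.
move=> HdX HdY [F [Y' [HF HFx HFy]]].
case: (pickP (fun _ : E => true)) => [e0 _ | HE].
  have [o1 Ho1] := orient_gen (leqnn _) (ev1 HdX HF HFx HFy).
  have [oB HoB] := orient_gen (leqnn _) (ev2 e0 HdX HdY HF HFx HFy Ho1).
  have [o3 Ho3] := orient_gen (leqnn _) (@ev3 _ _ _ _ _ _ _ e0 HdX HdY HF HFx HFy _ Ho1 _ HoB).
  split.
    exact: (@factor _ _ _ _ _ _ _ e0 HdX HdY HF HFx HFy _ Ho1 _ HoB _ Ho3).
  exact: (@coloring _ _ _ _ _ _ _ e0 HdX HdY HF HFx HFy _ Ho1 _ HoB _ Ho3).
have HX : X -> False.
  move=> x; have := HdX x; rewrite /degX (_ : [set e | ex e == x] = set0) ?cards0 //.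
  by apply/setP => e; have := HE e.
have HY : Y -> False.
  move=> y; have := HdY y; rewrite /degY (_ : [set e | ey e == y] = set0) ?cards0 //.
  by apply/setP => e; have := HE e.
split.
  by exists set0 => -[x|y]; [case: (HX x) | case: (HY y)].
exists (fun _ => 1); split.
- by move=> e; have := HE e.
- by move=> e; have := HE e.
- by case=> [x|y]; [case: (HX x) | case: (HY y)].
Qed.
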